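(* Let $f_\infty:[0,1]\to\mathbb{R}$ be the function defined in the context. Then for every Lebesgue measurable set $S\subset[0,1]$, $$\mathcal{H}^1\big(\{(x,f_\infty(x)):x\in S\}\big)\le |S|.$$ In particular $\mathcal{H}^1(\{(x,f_\infty(x)):x\in[0,1]\})\le 1$, and $f_\infty$ satisfies Luzin's condition: $\mathcal{H}^1(\{(x,f_\infty(x)):x\in N\})=0$ for every Lebesgue null set $N\subset[0,1]$.
   Context: Construction. Let $f:\mathbb{R}\to\mathbb{R}$ be $f(x)=0$ for $x\in[0,\tfrac12)+\mathbb{Z}$ and $f(x)=\tfrac34$ for $x\in[\tfrac12,1)+\mathbb{Z}$. Let $g:\mathbb{N}\to\mathbb{R}_+$ be strictly increasing with $g(k)\to\infty$, and set $a_1=g(1)$, $a_k=\min\{1,g(k)-g(k-1)\}$ for $k\ge2$ (so $a_k>0$ and $\sum_k a_k=\infty$). Let $(m_k)_{k\ge1}$ be positive integers with $m_k>m_{k-1}$, $1000\cdot4^{-m_k}\le a_k4^{-m_{k-1}}$ and $1000\cdot4^{-m_k}\le a_{k-1}4^{-m_{k-1}}$ for all $k\ge2$. For $n\in\{1,2,\dots\}\cup\{\infty\}$ define $f_n:[0,1]\to\mathbb{R}$ by $f_n(x)=f(2x)+\sum_{j=1}^{n}a_j4^{-m_j}f(2\cdot4^{m_j}x)$. *)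

(* Defs.v *)
From Stdlib Require Import Reals Lra Lia.
Open Scope R_scope.

Definition fstep (x : R) : R :=
  if Rlt_dec (frac_part x) (1/2) then 0 else 3/4.

Definition acoef (g : nat -> R) (k : nat) : R :=
  match k with
  | O => 0
  | S O => g 1%nat
  | S k' => Rmin 1 (g k - g k')
  end.

Definition fterm (g : nat -> R) (m : nat -> nat) (j : nat) (x : R) : R :=
  acoef g j / (4 ^ m j) * fstep (2 * 4 ^ m j * x).

Fixpoint psum (g : nat -> R) (m : nat -> nat) (n : nat) (x : R) : R :=
  match n with
  | O => 0
  | S n' => psum g m n' x + fterm g m n x
  end.

Definition f_n (g : nat -> R) (m : nat -> nat) (n : nat) (x : R) : R :=
  fstep (2 * x) + psum g m n x.

Definition f_inf_graph_rel (g : nat -> R) (m : nat -> nat) (x y : R) : Prop :=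
  Un_cv (fun n => psum g m n x) (y - fstep (2 * x)).

Definition graph_over (g : nat -> R) (m : nat -> nat) (S : R -> Prop)
  : R * R -> Prop :=
  fun p => S (fst p) /\ f_inf_graph_rel g m (fst p) (snd p).

Definition dist2 (p q : R * R) : R :=
  sqrt ((fst p - fst q) ^ 2 + (snd p - snd q) ^ 2).

(* H^1(A) <= M  (unnormalized 1-dim Hausdorff measure = sup_delta H^1_delta,
   H^1_delta(A) = inf of sum diam U_i over countable covers by sets of
   diameter <= delta).  Here d i is an upper bound for diam (U i). *)
Definition H1_le (A : R * R -> Prop) (M : R) : Prop :=
  forall delta eps : R, 0 < delta -> 0 < eps ->
  exists (U : nat -> R * R -> Prop) (d : nat -> R),
    (forall i, 0 <= d i <= delta) /\
    (forall i p q, U i p -> U i q -> dist2 p q <= d i) /\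
    (forall p, A p -> exists i, U i p) /\
    (forall n, sum_f_R0 d n <= M + eps).

Definition leb_outer_le (S : R -> Prop) (M : R) : Prop :=
  forall eps : R, 0 < eps ->
  exists a b : nat -> R,
    (forall i, a i <= b i) /\
    (forall x, S x -> exists i, a i <= x <= b i) /\
    (forall n, sum_f_R0 (fun i => b i - a i) n <= M + eps).

(* Caratheodory measurability: for every A, lambda*(A) >= lambda*(A∩S) +
   lambda*(A\S) (trivial when lambda*(A) = +oo). *)
Definition leb_measurable (S : R -> Prop) : Prop :=
  forall (A : R -> Prop) (M : R), leb_outer_le A M ->
  exists M1 M2 : R,
    leb_outer_le (fun x => A x /\ S x) M1 /\
    leb_outer_le (fun x => A x /\ ~ S x) M2 /\
    M1 + M2 <= M.

Definition in01 (x : R) : Prop := 0 <= x <= 1.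

(* Main.v *)
Require Import Defs.
From Stdlib Require Import Reals Lra Lia Psatz ZArith List Classical IndefiniteDescription.
Open Scope R_scope.

Record Hyp (g : nat -> R) (m : nat -> nat) : Prop := {
  h_gpos : forall k, (1 <= k)%nat -> 0 < g k;
  h_gincr : forall k, (1 <= k)%nat -> g k < g (S k);
  h_mpos : forall k, (1 <= k)%nat -> (1 <= m k)%nat;
  h_mincr : forall k, (2 <= k)%nat -> (m (pred k) < m k)%nat;
  h_c1 : forall k, (2 <= k)%nat -> 1000 / 4 ^ m k <= acoef g k / 4 ^ m (pred k);
  h_c2 : forall k, (2 <= k)%nat -> 1000 / 4 ^ m k <= acoef g (pred k) / 4 ^ m (pred k)
}.

Definition Mx (m : nat -> nat) (l : nat) : nat := match l with 0%nat => 0%nat | _ => m l end.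
Definition NN (m : nat -> nat) (l : nat) : R := 4 * 4 ^ (Mx m l).
Definition Aa g m l : R := acoef g l / 4 ^ (m l) * (3/4).
Definition Tb g m n : R := 1000/999 * Aa g m (S n).
Definition incell m l (w : Z) (x : R) : Prop := IZR w <= NN m l * x < IZR w + 1.
Definition samecell m l x y : Prop := exists w, incell m l w x /\ incell m l w y.
Definition Fn g m n x := fstep (2*x) + psum g m n x.
Definition Qz (m : nat -> nat) k t : Z := (4 ^ Z.of_nat (Mx m t - Mx m k))%Z.

Lemma acoef_pos g m (H : Hyp g m) k : (1 <= k)%nat -> 0 < acoef g k.
Proof.
  intros Hk. destruct k as [|[|k]]; [lia| |].
  - simpl. apply (h_gpos _ _ H); lia.
  - unfold acoef. apply Rmin_glb_lt; [lra|].
    assert (g (S k) < g (S (S k))) by (apply (h_gincr _ _ H); lia). lra.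
Qed.

Lemma acoef_le1 g k : (2 <= k)%nat -> acoef g k <= 1.
Proof.
  intros Hk. destruct k as [|[|k]]; [lia|lia|]. unfold acoef. apply Rmin_l.
Qed.

Lemma Mx_S g m (H : Hyp g m) l : (Mx m l < Mx m (S l))%nat.
Proof.
  destruct l as [|l]; simpl.
  - pose proof (h_mpos _ _ H 1%nat). lia.
  - pose proof (h_mincr _ _ H (S (S l))). simpl in H0. destruct l; lia.
Qed.

Lemma Mx_mono g m (H : Hyp g m) l t : (l <= t)%nat -> (Mx m l <= Mx m t)%nat.
Proof.
  induction 1; [lia|]. pose proof (Mx_S g m H m0). lia.
Qed.

Lemma Mx_smono g m (H : Hyp g m) l t : (l < t)%nat -> (Mx m l < Mx m t)%nat.
Proof.
  intros Hl. pose proof (Mx_S g m H l). pose proof (Mx_mono g m H (S l) t Hl). lia.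
Qed.

Lemma Mx_ge g m (H : Hyp g m) l : (l <= Mx m l)%nat.
Proof.
  induction l; [simpl; lia|]. pose proof (Mx_S g m H l). lia.
Qed.

Lemma NN_pos m l : 0 < NN m l.
Proof. unfold NN. pose proof (pow_lt 4 (Mx m l)). lra. Qed.

Lemma IZR_Qz m k t : IZR (Qz m k t) = 4 ^ (Mx m t - Mx m k).
Proof. unfold Qz. rewrite <- pow_IZR. reflexivity. Qed.

Lemma NN_ratio g m (H : Hyp g m) k t : (k <= t)%nat -> NN m t = IZR (Qz m k t) * NN m k.
Proof.
  intros Hkt. rewrite IZR_Qz. unfold NN.
  pose proof (Mx_mono g m H k t Hkt).
  replace (Mx m t) with ((Mx m t - Mx m k) + Mx m k)%nat at 1 by lia.
  rewrite pow_add. ring.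
Qed.

Lemma Qz_even g m (H : Hyp g m) k t : (k < t)%nat -> Z.even (Qz m k t) = true.
Proof.
  intros Hkt. unfold Qz. pose proof (Mx_smono g m H k t Hkt).
  rewrite Z.even_pow by lia. reflexivity.
Qed.

Lemma Qz_pos m k t : (1 <= Qz m k t)%Z.
Proof. unfold Qz. pose proof (Z.pow_pos_nonneg 4 (Z.of_nat (Mx m t - Mx m k))). lia. Qed.

Lemma NN_1000 g m (H : Hyp g m) k : (1 <= k)%nat -> 1000 * NN m k <= NN m (S k).
Proof.
  intros Hk. pose proof (h_c1 _ _ H (S k) ltac:(lia)) as C. simpl pred in C.
  pose proof (acoef_le1 g (S k) ltac:(lia)).
  pose proof (acoef_pos g m H (S k) ltac:(lia)).
  unfold NN. destruct k as [|k]; [lia|]. simpl Mx. 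
  set (a := 4 ^ m (S k)) in *. set (b := 4 ^ m (S (S k))) in *.
  assert (0 < a) by (apply pow_lt; lra). assert (0 < b) by (apply pow_lt; lra).
  assert (E : 1000 / b <= 1 / a).
  { eapply Rle_trans; [exact C|]. unfold Rdiv. apply Rmult_le_compat_r; [|lra].
    left; apply Rinv_0_lt_compat; lra. }
  unfold Rdiv in E. apply Rmult_le_compat_r with (r := a * b) in E; [|nra].
  replace (1000 * / b * (a * b)) with (1000 * a) in E by (field; lra).
  replace (1 * / a * (a * b)) with b in E by (field; lra). lra.
Qed.

Lemma floor_ex r : exists t : Z, IZR t <= r < IZR t + 1.
Proof.
  exists (up r - 1)%Z. destruct (archimed r) as [H1 H2]. rewrite minus_IZR. simpl. lra.
Qed.

Lemma fstep_half (w : Z) (t : R) : IZR w <= 2*t < IZR w + 1 ->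
  fstep t = if Z.even w then 0 else 3/4.
Proof.
  intros [H1 H2]. unfold fstep, frac_part, Int_part.
  destruct (Z.even w) eqn:E.
  - apply Z.even_spec in E. destruct E as [u ->]. rewrite mult_IZR in *. simpl in *.
    assert (up t = u + 1)%Z.
    { symmetry. apply tech_up; rewrite plus_IZR; simpl; lra. }
    rewrite H. rewrite minus_IZR, plus_IZR. simpl.
    destruct (Rlt_dec _ _); [reflexivity| exfalso; lra].
  - assert (Z.odd w = true) by (rewrite <- Z.negb_even, E; reflexivity).
    apply Z.odd_spec in H. destruct H as [u ->]. rewrite plus_IZR, mult_IZR in *. simpl in *.
    assert (up t = u + 1)%Z.
    { symmetry. apply tech_up; rewrite plus_IZR; simpl; lra. }
    rewrite H. rewrite minus_IZR, plus_IZR. simpl.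
    destruct (Rlt_dec _ _); [exfalso; lra| reflexivity].
Qed.

Lemma fstep0_val m w x : incell m 0 w x -> fstep (2*x) = if Z.even w then 0 else 3/4.
Proof.
  unfold incell, NN. simpl. intros Hc. apply fstep_half. lra.
Qed.

Lemma fterm_val g m l w x : (1 <= l)%nat -> incell m l w x ->
  fterm g m l x = if Z.even w then 0 else Aa g m l.
Proof.
  intros Hl Hc. unfold fterm, Aa. rewrite (fstep_half w).
  - destruct (Z.even w); ring.
  - unfold incell, NN in Hc. destruct l; [lia|]. simpl Mx in Hc. lra.
Qed.

Lemma nest1 g m (H : Hyp g m) l x y : samecell m (S l) x y -> samecell m l x y.
Proof.
  intros [w [Hx Hy]]. destruct (floor_ex (NN m l * x)) as [t Ht].
  exists t. split; [exact Ht|].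
  pose proof (NN_ratio g m H l (S l) ltac:(lia)) as R.
  pose proof (Qz_pos m l (S l)) as Q. set (q := Qz m l (S l)) in *.
  assert (Qr : 1 <= IZR q) by (apply IZR_le; lia).
  unfold incell in *. rewrite R in Hx, Hy.
  assert (A1 : (q * t <= w)%Z).
  { assert (IZR (q*t) < IZR (w + 1)).
    { rewrite mult_IZR, plus_IZR. simpl. nra. }
    apply lt_IZR in H0. lia. }
  assert (A2 : (w + 1 <= q * (t + 1))%Z).
  { assert (IZR w < IZR (q * (t+1))).
    { rewrite mult_IZR, plus_IZR. simpl. nra. }
    apply lt_IZR in H0. lia. }
  apply IZR_le in A1. apply IZR_le in A2. rewrite mult_IZR in A1. rewrite plus_IZR, mult_IZR, plus_IZR in A2. simpl in A2.
  split; nra.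
Qed.

Lemma nest g m (H : Hyp g m) l l' x y : (l <= l')%nat -> samecell m l' x y -> samecell m l x y.
Proof.
  induction 1; auto. intros Hs. apply IHle. apply (nest1 g m H); auto.
Qed.

Definition digeq m t x y := exists w w', incell m t w x /\ incell m t w' y /\ Z.even w = Z.even w'.

Lemma same_digeq m t x y : samecell m t x y -> digeq m t x y.
Proof. intros [w [A B]]. exists w, w. auto. Qed.

Lemma Fn_digeq g m n x y : (forall t, (t <= n)%nat -> digeq m t x y) -> Fn g m n x = Fn g m n y.
Proof.
  intros Hd. unfold Fn.
  assert (E0 : fstep (2*x) = fstep (2*y)).
  { destruct (Hd 0%nat ltac:(lia)) as [w [w' [A [B C]]]].
    rewrite (fstep0_val m w x A), (fstep0_val m w' y B), C. reflexivity. }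
  rewrite E0. f_equal.
  induction n; simpl; [reflexivity|].
  rewrite IHn by (intros; apply Hd; lia). f_equal.
  destruct (Hd (S n) ltac:(lia)) as [w [w' [A [B C]]]].
  rewrite (fterm_val g m (S n) w x ltac:(lia) A), (fterm_val g m (S n) w' y ltac:(lia) B), C. reflexivity.
Qed.

Lemma Fn_same g m (H : Hyp g m) n x y : samecell m n x y -> Fn g m n x = Fn g m n y.
Proof.
  intros Hs. apply Fn_digeq. intros t Ht. apply same_digeq. eapply nest; eauto.
Qed.

Lemma Aa_nonneg g m (H : Hyp g m) l : (1 <= l)%nat -> 0 <= Aa g m l.
Proof.
  intros Hl. unfold Aa. pose proof (acoef_pos g m H l Hl). pose proof (pow_lt 4 (m l) ltac:(lra)).
  apply Rmult_le_pos; [|lra]. unfold Rdiv. apply Rmult_le_pos; [lra|]. left; apply Rinv_0_lt_compat; lra.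
Qed.

Lemma fterm_bounds g m (H : Hyp g m) l x : (1 <= l)%nat -> 0 <= fterm g m l x <= Aa g m l.
Proof.
  intros Hl. destruct (floor_ex (NN m l * x)) as [w Hw].
  rewrite (fterm_val g m l w x Hl Hw). pose proof (Aa_nonneg g m H l Hl).
  destruct (Z.even w); lra.
Qed.

Lemma Aa_decay g m (H : Hyp g m) l : (1 <= l)%nat -> 1000 * Aa g m (S l) <= Aa g m l.
Proof.
  intros Hl. pose proof (h_c2 _ _ H (S l) ltac:(lia)) as C. simpl pred in C.
  pose proof (acoef_le1 g (S l) ltac:(lia)). pose proof (acoef_pos g m H (S l) ltac:(lia)).
  unfold Aa. set (a := 4 ^ m l) in *. set (b := 4 ^ m (S l)) in *.
  assert (0 < a) by (apply pow_lt; lra). assert (0 < b) by (apply pow_lt; lra).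
  assert (acoef g (S l) / b <= 1 / b).
  { unfold Rdiv. apply Rmult_le_compat_r; [left; apply Rinv_0_lt_compat; lra| lra]. }
  assert (1000 * (acoef g (S l) / b) <= acoef g l / a).
  { eapply Rle_trans; [|exact C]. unfold Rdiv in *. nra. }
  nra.
Qed.

Lemma Aa_le_L g m (H : Hyp g m) l : (2 <= l)%nat -> Aa g m l <= 3 / NN m l.
Proof.
  intros Hl. pose proof (acoef_le1 g l Hl). pose proof (acoef_pos g m H l ltac:(lia)).
  unfold Aa, NN. destruct l as [|l]; [lia|]. simpl Mx.
  assert (0 < 4 ^ m (S l)) by (apply pow_lt; lra).
  unfold Rdiv. rewrite Rinv_mult. 
  assert (0 < / 4 ^ m (S l)) by (apply Rinv_0_lt_compat; lra). nra.
Qed.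

Lemma psum_tail g m (H : Hyp g m) n N x : (n <= N)%nat ->
  0 <= psum g m N x - psum g m n x <= 1000/999 * (Aa g m (S n) - Aa g m (S N)).
Proof.
  induction 1.
  - lra.
  - simpl. pose proof (fterm_bounds g m H (S m0) x ltac:(lia)).
    pose proof (Aa_decay g m H (S m0) ltac:(lia)). lra.
Qed.

Lemma Tb_nonneg g m (H : Hyp g m) n : 0 <= Tb g m n.
Proof. unfold Tb. pose proof (Aa_nonneg g m H (S n) ltac:(lia)). lra. Qed.

Lemma lim_bounds (u : nat -> R) l a b n0 : Un_cv u l -> (forall n, (n0 <= n)%nat -> a <= u n <= b) -> a <= l <= b.
Proof.
  intros Hc Hb. split.
  - destruct (Rle_or_lt a l); auto. exfalso.
    destruct (Hc (a - l) ltac:(lra)) as [N HN].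
    specialize (HN (max N n0) ltac:(lia)). specialize (Hb (max N n0) ltac:(lia)).
    unfold Rdist in HN. apply Rabs_def2 in HN. lra.
  - destruct (Rle_or_lt l b); auto. exfalso.
    destruct (Hc (l - b) ltac:(lra)) as [N HN].
    specialize (HN (max N n0) ltac:(lia)). specialize (Hb (max N n0) ltac:(lia)).
    unfold Rdist in HN. apply Rabs_def2 in HN. lra.
Qed.

Lemma graph_val g m (H : Hyp g m) x y n : f_inf_graph_rel g m x y ->
  0 <= y - Fn g m n x <= Tb g m n.
Proof.
  intros Hr. unfold f_inf_graph_rel in Hr. unfold Fn.
  assert (0 <= (y - fstep (2*x)) - psum g m n x <= Tb g m n); [|lra].
  assert (psum g m n x + 0 <= y - fstep (2*x) <= psum g m n x + Tb g m n); [|lra].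
  apply (lim_bounds _ _ _ _ n Hr). intros N HN.
  pose proof (psum_tail g m H n N x HN). unfold Tb.
  pose proof (Aa_nonneg g m H (S N) ltac:(lia)). lra.
Qed.

Lemma Fn_tail g m (H : Hyp g m) n N x : (n <= N)%nat ->
  0 <= Fn g m N x - Fn g m n x <= Tb g m n.
Proof.
  intros HnN. unfold Fn, Tb. pose proof (psum_tail g m H n N x HnN).
  pose proof (Aa_nonneg g m H (S N) ltac:(lia)). lra.
Qed.

Lemma Tb_le_L g m (H : Hyp g m) n : (1 <= n)%nat -> Tb g m n <= 3.01 / NN m (S n).
Proof.
  intros Hn. unfold Tb. pose proof (Aa_le_L g m H (S n) ltac:(lia)). pose proof (NN_pos m (S n)).
  unfold Rdiv in *. assert (0 < / NN m (S n)) by (apply Rinv_0_lt_compat; lra). nra.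
Qed.

Fixpoint Pr m (r : nat) (k : nat) (z : Z) : R :=
  match r with O => IZR z / NN m k | S r' => Pr m r' (S k) (z * Qz m k (S k) + 1) end.
Fixpoint SL m (r k : nat) : R :=
  match r with O => 0 | S r' => / NN m (S k) + SL m r' (S k) end.

Lemma Pr_eq g m (H : Hyp g m) r k z : Pr m r k z = IZR z / NN m k + SL m r k.
Proof.
  revert k z. induction r; intros k z; simpl; [ring|].
  rewrite IHr. rewrite plus_IZR, mult_IZR. simpl.
  rewrite (NN_ratio g m H k (S k)) by lia.
  pose proof (NN_pos m k). pose proof (Qz_pos m k (S k)).
  assert (0 < IZR (Qz m k (S k))) by (apply IZR_lt; lia).
  field. lra.
Qed.

Lemma SL_bound g m (H : Hyp g m) r k : (1 <= k)%nat -> 0 <= SL m r k <= 1000/999 / NN m (S k).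
Proof.
  revert k. induction r; intros k Hk; simpl.
  - pose proof (NN_pos m (S k)). split; [lra|]. unfold Rdiv. apply Rmult_le_pos; [lra|].
    left; apply Rinv_0_lt_compat; lra.
  - specialize (IHr (S k) ltac:(lia)). pose proof (NN_1000 g m H (S k) ltac:(lia)).
    pose proof (NN_pos m (S k)). pose proof (NN_pos m (S (S k))).
    assert (0 < / NN m (S k)) by (apply Rinv_0_lt_compat; lra).
    assert (/ NN m (S (S k)) <= / (1000 * NN m (S k))) by (apply Rinv_le_contravar; lra).
    rewrite Rinv_mult in H4. unfold Rdiv in *. split; [lra|]. nra.
Qed.

Lemma SL_small g m (H : Hyp g m) r k : (1 <= k)%nat -> 0 <= SL m r k <= / (999 * NN m k).
Proof.
  intros Hk. pose proof (SL_bound g m H r k Hk). pose proof (NN_1000 g m H k Hk).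
  pose proof (NN_pos m k).
  assert (/ NN m (S k) <= / (1000 * NN m k)) by (apply Rinv_le_contravar; lra).
  rewrite Rinv_mult in H3. rewrite Rinv_mult. unfold Rdiv in *.
  assert (0 < / NN m k) by (apply Rinv_0_lt_compat; lra). split; [lra|]. nra.
Qed.

Lemma G1 g m (H : Hyp g m) r k z : (1 <= k)%nat ->
  IZR z <= NN m k * Pr m r k z <= IZR z + 0.002.
Proof.
  intros Hk. rewrite (Pr_eq g m H). pose proof (SL_small g m H r k Hk). pose proof (NN_pos m k).
  rewrite Rinv_mult in H0.
  replace (NN m k * (IZR z / NN m k + SL m r k)) with (IZR z + NN m k * SL m r k) by (field; lra).
  assert (NN m k * SL m r k <= NN m k * (/999 * / NN m k)) by (apply Rmult_le_compat_l; lra).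
  replace (NN m k * (/999 * / NN m k)) with (/999) in H2 by (field; lra).
  assert (0 <= NN m k * SL m r k) by (apply Rmult_le_pos; lra). lra.
Qed.

Lemma G2 g m (H : Hyp g m) r k z : (1 <= k)%nat -> forall l, (k < l <= k + r)%nat ->
  exists w, IZR w <= NN m l * Pr m r k z <= IZR w + 0.002 /\ Z.even w = false.
Proof.
  revert k z. induction r; intros k z Hk l Hl; [lia|]. simpl.
  destruct (Nat.eq_dec l (S k)) as [->|Hne].
  - exists (z * Qz m k (S k) + 1)%Z. split; [apply (G1 g m H); lia|].
    rewrite Z.even_add, Z.even_mul, (Qz_even g m H k (S k)) by lia.
    rewrite Bool.orb_true_r. reflexivity.
  - apply (IHr (S k)); lia.
Qed.

Lemma NN_mono g m (H : Hyp g m) l t : (l <= t)%nat -> NN m l <= NN m t.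
Proof.
  intros Hlt. rewrite (NN_ratio g m H l t Hlt). pose proof (NN_pos m l).
  pose proof (Qz_pos m l t). assert (1 <= IZR (Qz m l t)) by (apply IZR_le; lia). nra.
Qed.

Lemma small_NN g m (H : Hyp g m) eps : 0 < eps -> exists n, forall l, (n <= l)%nat -> / NN m l <= eps.
Proof.
  intros He. destruct (pow_lt_1_zero (/4) ltac:(rewrite Rabs_pos_eq; lra) eps He) as [N HN].
  exists N. intros l Hl. pose proof (Mx_ge g m H l).
  specialize (HN (Mx m l) ltac:(lia)). rewrite Rabs_pos_eq in HN by (apply pow_le; lra).
  unfold NN. rewrite Rinv_mult. rewrite <- pow_inv. lra.
Qed.

Lemma search (Q : nat -> Prop) k r : Q k ->
  Q (k + r)%nat \/ exists i, (k <= i < k + r)%nat /\ Q i /\ ~ Q (S i).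
Proof.
  intros Hk. induction r.
  - left. rewrite Nat.add_0_r. exact Hk.
  - destruct IHr as [A|[i [Hi [B C]]]].
    + destruct (classic (Q (k + S r)%nat)) as [D|D]; [left; exact D|].
      right. exists (k + r)%nat. split; [lia|]. split; auto. rewrite Nat.add_succ_r in D. exact D.
    + right. exists i. split; [lia|auto].
Qed.

Lemma incell_P g m (H : Hyp g m) r k z : (1 <= k)%nat -> incell m k z (Pr m r k z).
Proof. intros Hk. pose proof (G1 g m H r k z Hk). unfold incell. lra. Qed.

Lemma S1 g m (H : Hyp g m) k r z x y : (1 <= k)%nat ->
  Pr m r k z <= x -> NN m k * x < IZR z + 1 -> f_inf_graph_rel g m x y ->
  Rabs (y - Fn g m (k + r) (Pr m r k z)) <= Tb g m (k + r) + 3.1 * (x - Pr m r k z).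
Proof.
  intros Hk Hx1 Hx2 Hr. set (P := Pr m r k z) in *.
  assert (Q0 : samecell m k x P).
  { exists z. split; [|apply (incell_P g m H r k z Hk)]. unfold incell.
    pose proof (G1 g m H r k z Hk). pose proof (NN_pos m k).
    assert (NN m k * P <= NN m k * x) by (apply Rmult_le_compat_l; lra). fold P in H0. lra. }
  destruct (search (fun i => samecell m i x P) k r Q0) as [A|[i [Hi [B C]]]].
  - rewrite <- (Fn_same g m H _ _ _ A). pose proof (graph_val g m H x y (k + r) Hr).
    rewrite Rabs_pos_eq by lra. lra.
  - pose proof (Fn_same g m H _ _ _ B) as E. pose proof (graph_val g m H x y i Hr).
    pose proof (Fn_tail g m H i (k + r) P ltac:(lia)).
    assert (Rabs (y - Fn g m (k + r) P) <= Tb g m i) by (apply Rabs_le; lra).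
    destruct (G2 g m H r k z Hk (S i) ltac:(lia)) as [w [Hw _]]. fold P in Hw.
    assert (NN m (S i) * x >= IZR w + 1).
    { destruct (Rlt_or_le (NN m (S i) * x) (IZR w + 1)); [|lra]. exfalso. apply C.
      exists w. unfold incell. pose proof (NN_pos m (S i)).
      assert (NN m (S i) * P <= NN m (S i) * x) by (apply Rmult_le_compat_l; lra). lra. }
    pose proof (Tb_le_L g m H i ltac:(lia)). pose proof (NN_pos m (S i)).
    pose proof (Tb_nonneg g m H (k + r)).
    assert (3.01 / NN m (S i) <= 3.1 * (x - P)).
    { assert (x - P >= 0.998 / NN m (S i)).
      { unfold Rdiv. apply Rle_ge. apply Rmult_le_reg_l with (NN m (S i)); [lra|].
        replace (NN m (S i) * (0.998 * / NN m (S i))) with 0.998 by (field; lra). lra. }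
      unfold Rdiv in *. assert (0 < / NN m (S i)) by (apply Rinv_0_lt_compat; lra). lra. }
    lra.
Qed.

Lemma Fn_right g m (H : Hyp g m) k r z x i : (1 <= k)%nat -> (k <= i <= k + r)%nat ->
  (IZR z + 1) / NN m k - / NN m i <= x -> Pr m r k z <= x -> NN m k * x < IZR z + 1 ->
  Fn g m i x = Fn g m i (Pr m r k z).
Proof.
  intros Hk Hi Hq Hx1 Hx2. set (P := Pr m r k z) in *.
  assert (Q0 : samecell m k x P).
  { exists z. split; [|apply (incell_P g m H r k z Hk)]. unfold incell.
    pose proof (G1 g m H r k z Hk). pose proof (NN_pos m k).
    assert (NN m k * P <= NN m k * x) by (apply Rmult_le_compat_l; lra). fold P in H0. lra. }
  apply Fn_digeq. intros t Ht.
  destruct (le_lt_dec t k) as [Htk|Htk].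
  - apply same_digeq. apply (nest g m H t k); auto.
  - destruct (G2 g m H r k z Hk t ltac:(lia)) as [w [Hw Ew]].
    exists ((z + 1) * Qz m k t - 1)%Z, w. split; [|split].
    + unfold incell. rewrite minus_IZR, mult_IZR, plus_IZR. simpl.
      rewrite (NN_ratio g m H k t) by lia.
      pose proof (NN_pos m k). pose proof (Qz_pos m k t).
      assert (Q1 : 0 < IZR (Qz m k t)) by (apply IZR_lt; lia).
      pose proof (NN_mono g m H t i ltac:(lia)). pose proof (NN_pos m t).
      assert (HH3 : / NN m i <= / NN m t) by (apply Rinv_le_contravar; lra).
      rewrite (NN_ratio g m H k t) in HH3 by lia.
      assert (HH4 : x >= (IZR z + 1) / NN m k - / (IZR (Qz m k t) * NN m k)) by lra.
      split.
      * apply Rge_le in HH4. apply Rmult_le_compat_l with (r := IZR (Qz m k t) * NN m k) in HH4; [|nra].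
        replace (IZR (Qz m k t) * NN m k * ((IZR z + 1) / NN m k - / (IZR (Qz m k t) * NN m k)))
          with ((IZR z + 1) * IZR (Qz m k t) - 1) in HH4 by (field; lra). lra.
      * assert (IZR (Qz m k t) * (NN m k * x) < IZR (Qz m k t) * (IZR z + 1)) by (apply Rmult_lt_compat_l; lra).
        lra.
    + fold P in Hw. unfold incell. lra.
    + rewrite Ew. rewrite Z.even_sub, Z.even_mul, (Qz_even g m H k t) by lia.
      rewrite Bool.orb_true_r. reflexivity.
Qed.

Lemma S2 g m (H : Hyp g m) k r z x y : (1 <= k)%nat ->
  Pr m r k z <= x -> NN m k * x < IZR z + 1 -> f_inf_graph_rel g m x y ->
  Rabs (y - Fn g m (k + r) (Pr m r k z)) <= Tb g m (k + r) + 3.1 * ((IZR z + 1) / NN m k - x).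
Proof.
  intros Hk Hx1 Hx2 Hr. set (P := Pr m r k z) in *.
  set (v := (IZR z + 1) / NN m k).
  assert (Q0 : v - / NN m k <= x).
  { pose proof (G1 g m H r k z Hk). pose proof (NN_pos m k).
    assert (IZR z / NN m k <= P).
    { unfold Rdiv. apply Rmult_le_reg_l with (NN m k); [lra|].
      replace (NN m k * (IZR z * / NN m k)) with (IZR z) by (field; lra). fold P in H0. lra. }
    unfold v. replace ((IZR z + 1) / NN m k - / NN m k) with (IZR z / NN m k) by (field; lra). lra. }
  pose proof (NN_pos m k) as Nk.
  assert (Hv : x < v).
  { unfold v, Rdiv. apply Rmult_lt_reg_l with (NN m k); [lra|].
    replace (NN m k * ((IZR z + 1) * / NN m k)) with (IZR z + 1) by (field; lra). lra. }
  destruct (search (fun i => v - / NN m i <= x) k r Q0) as [A|[i [Hi [B C]]]].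
  - pose proof (Fn_right g m H k r z x (k + r) Hk ltac:(lia) A Hx1 Hx2) as E0. fold P in E0. rewrite <- E0.
    pose proof (graph_val g m H x y (k + r) Hr).
    rewrite Rabs_pos_eq by lra. lra.
  - pose proof (Fn_right g m H k r z x i Hk ltac:(lia) B Hx1 Hx2) as E.
    pose proof (graph_val g m H x y i Hr).
    pose proof (Fn_tail g m H i (k + r) P ltac:(lia)). fold P in E.
    assert (Rabs (y - Fn g m (k + r) P) <= Tb g m i) by (apply Rabs_le; lra).
    pose proof (Tb_le_L g m H i ltac:(lia)). pose proof (NN_pos m (S i)).
    pose proof (Tb_nonneg g m H (k + r)).
    assert (v - x > / NN m (S i)) by lra.
    assert (3.01 / NN m (S i) <= 3.1 * (v - x)).
    { unfold Rdiv in *. assert (0 < / NN m (S i)) by (apply Rinv_0_lt_compat; lra). lra. }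
    fold v. lra.
Qed.
Lemma core_ineq e s th mu dy : 0 < e -> 0 <= s <= e -> 0 < th <= 1 -> 0 <= mu <= th * e / 2 ->
  Rabs dy <= 2 * mu + 3.1 * s -> Rabs dy <= e / 300 -> (e - s)^2 + dy^2 <= (e * (1 + th))^2.
Proof.
  intros He Hs Ht Hm H1 H2.
  assert (dy^2 = Rabs dy ^ 2) by (rewrite pow2_abs; reflexivity).
  rewrite H. set (a := Rabs dy) in *. assert (0 <= a) by apply Rabs_pos.
  destruct (Rle_or_lt s (e/20)).
  - assert (a^2 <= (2*mu + 3.1*s)^2) by (apply pow_incr; lra).
    assert ((2*mu + 3.1*s)^2 <= 8*mu^2 + 19.22*s^2) by (pose proof (pow2_ge_0 (2*mu - 3.1*s)); nra).
    assert (8*mu^2 <= 2*th^2*e^2) by nra.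
    assert (th^2 <= th) by nra. nra.
  - assert (a^2 <= (e/300)^2) by (apply pow_incr; lra). nra.
Qed.

Definition piece := ((R * R -> Prop) * R)%type.
Definition okpiece (d : R) (pc : piece) : Prop :=
  0 <= snd pc <= d /\ forall p q, fst pc p -> fst pc q -> dist2 p q <= snd pc.
Fixpoint sumd (l : list piece) : R := match l with nil => 0 | pc :: l' => snd pc + sumd l' end.
Definition Cov g m (X : R -> Prop) (l : list piece) (B d : R) : Prop :=
  (forall pc, In pc l -> okpiece d pc) /\
  (forall x y, X x -> f_inf_graph_rel g m x y -> exists pc, In pc l /\ fst pc (x, y)) /\
  sumd l <= B.
Definition Gset g m (X : R -> Prop) : R * R -> Prop := fun p => X (fst p) /\ f_inf_graph_rel g m (fst p) (snd p).

Lemma sumd_app l1 l2 : sumd (l1 ++ l2) = sumd l1 + sumd l2.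
Proof. induction l1; simpl; [ring|]. rewrite IHl1. ring. Qed.

Lemma Cov_app g m X1 X2 l1 l2 B1 B2 d : Cov g m X1 l1 B1 d -> Cov g m X2 l2 B2 d ->
  Cov g m (fun x => X1 x \/ X2 x) (l1 ++ l2) (B1 + B2) d.
Proof.
  intros [A1 [C1 S1]] [A2 [C2 S2]]. split; [|split].
  - intros pc Hin. apply in_app_iff in Hin. destruct Hin; auto.
  - intros x y [Hx|Hx] Hr.
    + destruct (C1 x y Hx Hr) as [pc [Hi Hp]]. exists pc. split; auto. apply in_app_iff; auto.
    + destruct (C2 x y Hx Hr) as [pc [Hi Hp]]. exists pc. split; auto. apply in_app_iff; auto.
  - rewrite sumd_app. lra.
Qed.

Lemma Cov_mono g m X X' l B B' d d' : Cov g m X l B d -> (forall x, X' x -> X x) -> B <= B' -> d <= d' ->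
  Cov g m X' l B' d'.
Proof.
  intros [A [C Sm]] HX HB Hd. split; [|split].
  - intros pc Hin. destruct (A pc Hin) as [[P1 P2] P3]. split; [lra|auto].
  - intros x y Hx Hr. apply C; auto.
  - lra.
Qed.

Lemma Cov_nil g m X B d : (forall x, ~ X x) -> 0 <= B -> Cov g m X nil B d.
Proof.
  intros HX HB. split; [|split].
  - intros pc [].
  - intros x y Hx. exfalso. apply (HX x Hx).
  - simpl. lra.
Qed.

Lemma dist_le p q D : 0 <= D -> (fst p - fst q)^2 + (snd p - snd q)^2 <= D^2 -> dist2 p q <= D.
Proof.
  intros HD H. unfold dist2. rewrite <- (sqrt_pow2 D HD). apply sqrt_le_1_alt. exact H.
Qed.

Lemma dist_sym p q : dist2 p q = dist2 q p.
Proof. unfold dist2. f_equal. ring. Qed.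

Lemma sq_bound a b A B : Rabs a <= A -> Rabs b <= B -> a^2 + b^2 <= (A + B)^2.
Proof.
  intros Ha Hb. rewrite <- (pow2_abs a), <- (pow2_abs b).
  pose proof (Rabs_pos a). pose proof (Rabs_pos b). nra.
Qed.

Lemma crude g m (H : Hyp g m) k z : (1 <= k)%nat ->
  okpiece (/ NN m k + Tb g m k) (Gset g m (incell m k z), / NN m k + Tb g m k).
Proof.
  intros Hk. pose proof (Tb_nonneg g m H k). pose proof (NN_pos m k).
  assert (0 < / NN m k) by (apply Rinv_0_lt_compat; lra).
  split; [simpl; lra|]. intros [x y] [x' y'] [Hx Hrx] [Hx' Hrx']. simpl in *.
  apply dist_le; [lra|]. simpl. apply sq_bound.
  - unfold incell in *. 
    assert (E : x - x' = (NN m k * x - NN m k * x') * / NN m k) by (field; lra).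
    rewrite E. apply Rabs_le. split; nra.
  - assert (Fn g m k x = Fn g m k x') by (apply (Fn_same g m H); exists z; auto).
    pose proof (graph_val g m H x y k Hrx). pose proof (graph_val g m H x' y' k Hrx').
    apply Rabs_le. lra.
Qed.

Definition claim g m th D : Prop := forall k z, (1 <= k)%nat ->
  exists l, Cov g m (incell m k z) l (/ NN m k * (1 + th) + 2 * (/500)^D * / NN m k) (2 / NN m k).

Lemma Tb_small g m (H : Hyp g m) k : (1 <= k)%nat -> Tb g m k <= 0.00301 * / NN m k.
Proof.
  intros Hk. pose proof (Tb_le_L g m H k Hk). pose proof (NN_1000 g m H k Hk). pose proof (NN_pos m k).
  assert (/ NN m (S k) <= / (1000 * NN m k)) by (apply Rinv_le_contravar; lra).
  rewrite Rinv_mult in H3. unfold Rdiv in H0. lra.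
Qed.

Lemma claim0 g m (H : Hyp g m) th : 0 < th -> claim g m th 0.
Proof.
  intros Ht k z Hk. exists ((Gset g m (incell m k z), / NN m k + Tb g m k) :: nil).
  pose proof (Tb_small g m H k Hk). pose proof (NN_pos m k). pose proof (Tb_nonneg g m H k).
  assert (0 < / NN m k) by (apply Rinv_0_lt_compat; lra).
  split; [|split].
  - intros pc [<-|[]]. pose proof (crude g m H k z Hk) as [A B]. split; [|exact B].
    simpl in *. unfold Rdiv. lra.
  - intros x y Hx Hr. exists (Gset g m (incell m k z), / NN m k + Tb g m k). split; [left; auto|].
    split; auto.
  - simpl. nra.
Qed.

Definition Stair m k z r : R -> Prop := fun x => IZR z <= NN m k * x /\ x < Pr m r k z.

Lemma stair_cov g m (H : Hyp g m) th D : 0 < th -> claim g m th D -> forall r k z, (1 <= k)%nat ->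
  exists l, Cov g m (Stair m k z r) l (SL m r k * (1 + th + 2 * (/500)^D)) (2 / NN m k).
Proof.
  intros Ht HC r. induction r; intros k z Hk.
  - exists nil. apply Cov_nil; [|simpl; lra].
    intros x [A B]. simpl in B. pose proof (NN_pos m k).
    assert (NN m k * x < IZR z).
    { apply Rmult_lt_compat_l with (r := NN m k) in B; [|lra].
      replace (NN m k * (IZR z / NN m k)) with (IZR z) in B by (field; lra). lra. }
    lra.
  - set (q := Qz m k (S k)).
    destruct (HC (S k) (z * q)%Z ltac:(lia)) as [l1 C1].
    destruct (IHr (S k) (z * q + 1)%Z ltac:(lia)) as [l2 C2].
    exists (l1 ++ l2).
    pose proof (NN_mono g m H k (S k) ltac:(lia)). pose proof (NN_pos m k).
    assert (2 / NN m (S k) <= 2 / NN m k).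
    { unfold Rdiv. apply Rmult_le_compat_l; [lra|]. apply Rinv_le_contravar; lra. }
    eapply Cov_mono; [apply (Cov_app g m _ _ _ _ _ _ _ C1 (Cov_mono g m _ _ _ _ _ _ _ C2 (fun x h => h) (Rle_refl _) (Rle_refl _)))| | |].
    + intros x [A B]. simpl in B.
      destruct (Rlt_or_le (NN m (S k) * x) (IZR (z * q) + 1)) as [E|E].
      * left. split; auto. rewrite (NN_ratio g m H k (S k)) by lia. fold q. rewrite mult_IZR.
        pose proof (Qz_pos m k (S k)). assert (0 < IZR q) by (apply IZR_lt; lia). nra.
      * right. split; auto. rewrite plus_IZR. exact E.
    + simpl. pose proof (pow_le (/500) D ltac:(lra)). lra.
    + exact H2.
Qed.

Definition Xg m k z r : R -> Prop := fun x => Pr m r k z <= x /\ NN m k * x < IZR z + 1.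

Lemma e_bounds g m (H : Hyp g m) k r z : (1 <= k)%nat ->
  (IZR z + 1) / NN m k - Pr m r k z = / NN m k - SL m r k /\
  0.998 * / NN m k <= / NN m k - SL m r k <= / NN m k.
Proof.
  intros Hk. rewrite (Pr_eq g m H). pose proof (SL_small g m H r k Hk). pose proof (NN_pos m k).
  rewrite Rinv_mult in H0. assert (0 < / NN m k) by (apply Rinv_0_lt_compat; lra).
  split; [field; lra| lra].
Qed.

Lemma good_aux g m (H : Hyp g m) k r z th x y x' y' : (1 <= k)%nat -> 0 < th <= 1 ->
  Tb g m (k + r) <= th * (/ NN m k - SL m r k) / 2 ->
  Xg m k z r x -> Xg m k z r x' -> x <= x' ->
  f_inf_graph_rel g m x y -> f_inf_graph_rel g m x' y' ->
  (x - x')^2 + (y - y')^2 <= ((/ NN m k - SL m r k) * (1 + th))^2.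
Proof.
  intros Hk Ht Hmu [Hx1 Hx2] [Hx1' Hx2'] Hxx Hr Hr'.
  destruct (e_bounds g m H k r z Hk) as [Ee Be].
  set (e := / NN m k - SL m r k) in *.
  set (P := Pr m r k z) in *. set (v := (IZR z + 1) / NN m k) in *.
  pose proof (NN_pos m k) as Nk.
  assert (Hv : x' < v).
  { unfold v, Rdiv. apply Rmult_lt_reg_l with (NN m k); [lra|].
    replace (NN m k * ((IZR z + 1) * / NN m k)) with (IZR z + 1) by (field; lra). lra. }
  pose proof (S1 g m H k r z x y Hk Hx1 Hx2 Hr) as A1.
  pose proof (S2 g m H k r z x' y' Hk Hx1' Hx2' Hr') as A2.
  fold P v in A1, A2.
  set (mu := Tb g m (k + r)) in *. pose proof (Tb_nonneg g m H (k + r)) as Hm0. fold mu in Hm0.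
  set (s := (x - P) + (v - x')).
  assert (Hdy1 : Rabs (y' - y) <= 2 * mu + 3.1 * s).
  { replace (y' - y) with ((y' - Fn g m (k + r) P) - (y - Fn g m (k + r) P)) by ring.
    eapply Rle_trans; [apply Rabs_triang|]. rewrite Rabs_Ropp. unfold s. lra. }
  assert (Hdy2 : Rabs (y' - y) <= e / 300).
  { assert (Fn g m k x = Fn g m k x').
    { apply (Fn_same g m H). exists z. unfold incell.
      pose proof (G1 g m H r k z Hk). fold P in H0.
      assert (NN m k * P <= NN m k * x) by (apply Rmult_le_compat_l; lra).
      assert (NN m k * P <= NN m k * x') by (apply Rmult_le_compat_l; lra). lra. }
    pose proof (graph_val g m H x y k Hr). pose proof (graph_val g m H x' y' k Hr').
    pose proof (Tb_small g m H k Hk). apply Rabs_le. lra. }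
  assert (Hs : 0 <= s <= e) by (unfold s; lra).
  pose proof (core_ineq e s th mu (y' - y) ltac:(lra) Hs Ht ltac:(lra) Hdy1 Hdy2) as C.
  replace ((x - x')^2) with ((e - s)^2) by (unfold s; rewrite <- Ee; ring).
  replace ((y - y')^2) with ((y' - y)^2) by ring. exact C.
Qed.

Lemma good_piece g m (H : Hyp g m) k r z th : (1 <= k)%nat -> 0 < th <= 1 ->
  Tb g m (k + r) <= th * (/ NN m k - SL m r k) / 2 ->
  okpiece (2 / NN m k) (Gset g m (Xg m k z r), (/ NN m k - SL m r k) * (1 + th)).
Proof.
  intros Hk Ht Hmu. destruct (e_bounds g m H k r z Hk) as [Ee Be].
  pose proof (NN_pos m k). assert (0 < / NN m k) by (apply Rinv_0_lt_compat; lra).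
  split.
  - simpl. unfold Rdiv. destruct Ht as [Ht1 Ht2]. destruct Be as [Be1 Be2].
    set (e := / NN m k - SL m r k) in *. split; nra.
  - intros [x y] [x' y'] [Hx Hr] [Hx' Hr']. simpl in *.
    apply dist_le; [nra|]. cbn [fst snd].
    destruct (Rle_or_lt x x').
    + apply (good_aux g m H k r z th x y x' y'); auto.
    + replace ((x - x')^2 + (y - y')^2) with ((x' - x)^2 + (y' - y)^2) by ring.
      apply (good_aux g m H k r z th x' y' x y); auto. lra.
Qed.

Lemma claimS g m (H : Hyp g m) th D : 0 < th <= 1 -> claim g m th D -> claim g m th (S D).
Proof.
  intros Ht HC k z Hk. pose proof (NN_pos m k) as Nk.
  assert (Ik : 0 < / NN m k) by (apply Rinv_0_lt_compat; lra).
  destruct (small_NN g m H (th * 0.49 * / NN m k / 3.01)) as [n Hn].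
  { apply Rmult_lt_0_compat; [|lra]. apply Rmult_lt_0_compat; lra. }
  set (r := S n).
  assert (Hmu : Tb g m (k + r) <= th * (/ NN m k - SL m r k) / 2).
  { pose proof (Tb_le_L g m H (k + r) ltac:(unfold r; lia)).
    specialize (Hn (S (k + r)) ltac:(unfold r; lia)).
    destruct (e_bounds g m H k r z Hk) as [_ Be]. unfold Rdiv in *. nra. }
  destruct (stair_cov g m H th D ltac:(lra) HC r k z Hk) as [l1 C1].
  destruct (e_bounds g m H k r z Hk) as [Ee Be].
  pose proof (SL_small g m H r k Hk) as Sb. rewrite Rinv_mult in Sb.
  exists (l1 ++ (Gset g m (Xg m k z r), (/ NN m k - SL m r k) * (1 + th)) :: nil).
  assert (C2 : Cov g m (Xg m k z r) ((Gset g m (Xg m k z r), (/ NN m k - SL m r k) * (1 + th)) :: nil)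
                 ((/ NN m k - SL m r k) * (1 + th)) (2 / NN m k)).
  { split; [|split].
    - intros pc [<-|[]]. apply good_piece; auto.
    - intros x y Hx Hr. eexists. split; [left; reflexivity|]. split; auto.
    - simpl. lra. }
  eapply Cov_mono; [apply (Cov_app g m _ _ _ _ _ _ _ C1 C2)| | |].
  - intros x Hx. destruct (Rlt_or_le x (Pr m r k z)).
    + left. split; auto. apply Hx.
    + right. split; auto. apply Hx.
  - simpl sumd. simpl pow. pose proof (pow_le (/500) D ltac:(lra)).
    assert ((/500)^D * SL m r k <= (/500)^D * (/999 * / NN m k)) by (apply Rmult_le_compat_l; lra).
    assert ((/500)^D * (/999 * / NN m k) <= (/500)^D * (/500 * / NN m k)) by (apply Rmult_le_compat_l; lra).
    nra.
  - lra.
Qed.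

Lemma claim_all g m (H : Hyp g m) th : 0 < th <= 1 -> forall D, claim g m th D.
Proof.
  intros Ht D. induction D; [apply (claim0 g m H); lra| apply (claimS g m H); auto].
Qed.

Lemma cells_cov g m k C d : 0 <= C -> (forall w, exists l, Cov g m (incell m k w) l C d) ->
  forall cnt w0, exists l, Cov g m (fun x => IZR w0 <= NN m k * x < IZR w0 + INR cnt) l (INR cnt * C) d.
Proof.
  intros HC Hc cnt. induction cnt; intros w0.
  - exists nil. apply Cov_nil; [|simpl; lra]. intros x Hx. simpl in Hx. lra.
  - destruct (Hc w0) as [l1 C1]. destruct (IHcnt (w0 + 1)%Z) as [l2 C2].
    exists (l1 ++ l2). eapply Cov_mono; [apply (Cov_app g m _ _ _ _ _ _ _ C1 C2)| | |].
    + intros x Hx. rewrite S_INR in Hx. destruct (Rlt_or_le (NN m k * x) (IZR w0 + 1)).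
      * left. unfold incell. lra.
      * right. rewrite plus_IZR. simpl. lra.
    + rewrite S_INR. lra.
    + lra.
Qed.

Lemma interval_cov g m (H : Hyp g m) a b d eps : a <= b -> 0 < d -> 0 < eps ->
  exists l, Cov g m (fun x => a <= x <= b) l (b - a + eps) d.
Proof.
  intros Hab Hd He. set (K := b - a + 1).
  set (th := Rmin 1 (eps / (4 * K))).
  assert (Hth : 0 < th <= 1).
  { unfold th. split; [apply Rmin_glb_lt; [lra|] | apply Rmin_l].
    unfold K. apply Rdiv_lt_0_compat; lra. }
  assert (Hth2 : th <= eps / (4 * K)) by apply Rmin_r.
  destruct (pow_lt_1_zero (/500) ltac:(rewrite Rabs_pos_eq; lra) (eps / (8 * K))) as [D HD].
  { unfold K. apply Rdiv_lt_0_compat; lra. }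
  specialize (HD D (le_n D)). rewrite Rabs_pos_eq in HD by (apply pow_le; lra).
  destruct (small_NN g m H (Rmin (d / 2) (Rmin (eps / 8) (1/2)))) as [n Hn].
  { repeat apply Rmin_glb_lt; lra. }
  set (k := max 1 n). specialize (Hn k ltac:(unfold k; lia)).
  assert (HL1 : / NN m k <= d / 2) by (eapply Rle_trans; [exact Hn| apply Rmin_l]).
  assert (HL2 : / NN m k <= eps / 8) by (eapply Rle_trans; [exact Hn|]; eapply Rle_trans; [apply Rmin_r| apply Rmin_l]).
  assert (HL3 : / NN m k <= 1/2) by (eapply Rle_trans; [exact Hn|]; eapply Rle_trans; [apply Rmin_r| apply Rmin_r]).
  pose proof (NN_pos m k) as Nk. assert (Ik : 0 < / NN m k) by (apply Rinv_0_lt_compat; lra).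
  set (C := / NN m k * (1 + th) + 2 * (/500)^D * / NN m k).
  pose proof (pow_le (/500) D ltac:(lra)) as Pc.
  assert (HC : 0 <= C) by (unfold C; nra).
  assert (Hc : forall w, exists l, Cov g m (incell m k w) l C d).
  { intros w. destruct (claim_all g m H th Hth D k w ltac:(unfold k; lia)) as [l Cl].
    exists l. eapply Cov_mono; [exact Cl| auto | apply Rle_refl |]. unfold Rdiv in *. lra. }
  destruct (floor_ex (NN m k * a)) as [w0 Hw0]. destruct (floor_ex (NN m k * b)) as [t1 Ht1].
  assert (NN m k * a <= NN m k * b) by (apply Rmult_le_compat_l; lra).
  assert (Hwt : (w0 <= t1)%Z) by (assert (IZR w0 < IZR t1 + 1) by lra; rewrite <- plus_IZR in H1; apply lt_IZR in H1; lia).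
  set (cnt := Z.to_nat (t1 - w0 + 1)).
  assert (Ecnt : INR cnt = IZR t1 - IZR w0 + 1).
  { unfold cnt. rewrite INR_IZR_INZ, Z2Nat.id by lia. rewrite plus_IZR, minus_IZR. reflexivity. }
  destruct (cells_cov g m k C d HC Hc cnt w0) as [l Cl].
  exists l. eapply Cov_mono; [exact Cl| | | apply Rle_refl].
  - intros x [Hx1 Hx2]. rewrite Ecnt.
    assert (NN m k * a <= NN m k * x) by (apply Rmult_le_compat_l; lra).
    assert (NN m k * x <= NN m k * b) by (apply Rmult_le_compat_l; lra). lra.
  - rewrite Ecnt. 
    assert (E1 : (IZR t1 - IZR w0 + 1) * / NN m k <= b - a + 2 * / NN m k).
    { assert (IZR t1 - IZR w0 + 1 <= NN m k * (b - a) + 2) by lra.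
      apply Rmult_le_compat_r with (r := / NN m k) in H1; [|lra].
      replace ((NN m k * (b - a) + 2) * / NN m k) with (b - a + 2 * / NN m k) in H1 by (field; lra). exact H1. }
    set (tau := th + 2 * (/500)^D).
    assert (Et : C = / NN m k * (1 + tau)) by (unfold C, tau; ring).
    rewrite Et.
    assert (Htau : K * tau <= eps / 2).
    { unfold tau. assert (K * th <= eps / 4).
      { assert (0 < K) by (unfold K; lra). 
        apply Rmult_le_compat_l with (r := K) in Hth2; [|lra].
        replace (K * (eps / (4 * K))) with (eps / 4) in Hth2 by (field; lra). exact Hth2. }
      assert (K * (/500)^D <= eps / 8).
      { assert (0 < K) by (unfold K; lra).
        assert (HD' : (/500)^D <= eps / (8 * K)) by lra.
        apply Rmult_le_compat_l with (r := K) in HD'; [|lra].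
        replace (K * (eps / (8 * K))) with (eps / 8) in HD' by (field; lra). lra. }
      lra. }
    assert (0 <= tau) by (unfold tau; lra).
    set (u := (IZR t1 - IZR w0 + 1) * / NN m k) in *.
    replace ((IZR t1 - IZR w0 + 1) * (/ NN m k * (1 + tau))) with (u * (1 + tau)) by (unfold u; ring).
    assert (0 <= u).
    { unfold u. apply Rmult_le_pos; [|lra]. apply IZR_le in Hwt. lra. }
    assert (u <= K) by (unfold K; lra).
    assert (u * tau <= K * tau) by (apply Rmult_le_compat_r; lra).
    lra.
Qed.

Definition dflt : piece := ((fun _ => False), 0).

Fixpoint Pre (LS : nat -> list piece) (I : nat) : list piece :=
  match I with O => nil | S I' => Pre LS I' ++ (LS I' ++ dflt :: nil) end.

Lemma len_Pre LS I : (I <= length (Pre LS I))%nat.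
Proof. induction I; simpl; [lia|]. rewrite !length_app. simpl. lia. Qed.

Lemma Pre_prefix LS I J : (I <= J)%nat -> exists rest, Pre LS J = Pre LS I ++ rest.
Proof.
  induction 1.
  - exists nil. rewrite app_nil_r. reflexivity.
  - destruct IHle as [rest E]. simpl. rewrite E. exists (rest ++ (LS m ++ dflt :: nil)).
    rewrite !app_assoc. reflexivity.
Qed.

Lemma nth_stable LS p I J : (p < length (Pre LS I))%nat -> (I <= J)%nat ->
  nth p (Pre LS J) dflt = nth p (Pre LS I) dflt.
Proof.
  intros Hp HIJ. destruct (Pre_prefix LS I J HIJ) as [rest E]. rewrite E. apply app_nth1; auto.
Qed.

Lemma in_Pre LS I pc : In pc (Pre LS I) -> exists i, In pc (LS i) \/ pc = dflt.
Proof.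
  induction I; simpl; [intros []|]. intros Hin. apply in_app_iff in Hin. destruct Hin as [A|A]; auto.
  apply in_app_iff in A. destruct A as [A|[A|[]]].
  - exists I. auto.
  - exists I. auto.
Qed.

Fixpoint sumd' (l : list piece) : R := match l with nil => 0 | pc :: l' => snd pc + sumd' l' end.

Lemma sum_nth_le (l : list piece) n : (forall pc, In pc l -> 0 <= snd pc) ->
  sum_f_R0 (fun p => snd (nth p l dflt)) n <= sumd l.
Proof.
  revert n. induction l as [|a l IH]; intros n Hp.
  - rewrite (sum_eq _ (fun _ => 0)). 
    + rewrite sum_cte. simpl. lra.
    + intros i _. destruct i; reflexivity.
  - assert (Hl : forall pc, In pc l -> 0 <= snd pc) by (intros; apply Hp; right; auto).
    assert (0 <= sumd l).
    { clear IH. induction l; simpl; [lra|]. pose proof (Hl a0 (or_introl eq_refl)).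
      assert (0 <= sumd l) by (apply IHl; [intros; apply Hp; destruct H0; [left|right;right]; auto | intros; apply Hl; right; auto]). lra. }
    destruct n.
    + simpl. lra.
    + rewrite decomp_sum by lia. simpl. pose proof (IH n Hl). lra.
Qed.

Lemma sumd_Pre LS n : sumd (Pre LS (S n)) = sum_f_R0 (fun i => sumd (LS i)) n.
Proof.
  induction n.
  - simpl. rewrite sumd_app. simpl. ring.
  - change (Pre LS (S (S n))) with (Pre LS (S n) ++ (LS (S n) ++ dflt :: nil)).
    rewrite sumd_app, IHn, sumd_app. simpl. ring.
Qed.

Lemma geo_half n : sum_f_R0 (fun i => (/2)^(S i)) n = 1 - (/2)^(S n).
Proof. induction n; simpl; [field|]. simpl in IHn. rewrite IHn. field. Qed.

Lemma main_gen g m (H : Hyp g m) (SS : R -> Prop) M : leb_outer_le SS M -> H1_le (graph_over g m SS) M.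
Proof.
  intros HS delta eps Hd He.
  destruct (HS (eps/2) ltac:(lra)) as [a [b [Hab [Hcov Hsum]]]].
  assert (HI : forall i, exists l, Cov g m (fun x => a i <= x <= b i) l (b i - a i + eps/2 * (/2)^(S i)) delta).
  { intros i. apply (interval_cov g m H); auto. pose proof (pow_lt (/2) (S i) ltac:(lra)). nra. }
  set (LS := fun i => proj1_sig (constructive_indefinite_description _ (HI i))).
  assert (HLS : forall i, Cov g m (fun x => a i <= x <= b i) (LS i) (b i - a i + eps/2 * (/2)^(S i)) delta).
  { intros i. unfold LS. destruct (constructive_indefinite_description _ (HI i)). exact c. }
  set (U := fun p => fst (nth p (Pre LS (S p)) dflt)).
  set (dd := fun p => snd (nth p (Pre LS (S p)) dflt)).
  assert (Hok : forall I pc, In pc (Pre LS I) -> okpiece delta pc).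
  { intros I pc Hin. destruct (in_Pre LS I pc Hin) as [i [A|A]].
    - destruct (HLS i) as [B _]. apply B; auto.
    - subst. split; simpl; [lra|]. intros p q [] _. }
  assert (Hin : forall p, In (nth p (Pre LS (S p)) dflt) (Pre LS (S p))).
  { intros p. apply nth_In. pose proof (len_Pre LS (S p)). lia. }
  exists U, dd. split; [|split; [|split]].
  - intros i. destruct (Hok _ _ (Hin i)) as [A _]. exact A.
  - intros i p q. destruct (Hok _ _ (Hin i)) as [_ A]. apply A.
  - intros [x y] [Sx Rxy]. simpl in Sx, Rxy.
    destruct (Hcov x Sx) as [i Hi].
    destruct (HLS i) as [_ [C _]]. destruct (C x y Hi Rxy) as [pc [Hpc Hxy]].
    assert (In pc (Pre LS (S i))) by (simpl; apply in_app_iff; right; apply in_app_iff; left; exact Hpc).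
    destruct (In_nth _ _ dflt H0) as [q [Hq Eq]].
    exists q. unfold U.
    pose proof (len_Pre LS (S q)).
    rewrite <- (nth_stable LS q (S q) (max (S q) (S i))) by lia.
    rewrite (nth_stable LS q (S i) (max (S q) (S i))) by lia.
    rewrite Eq. exact Hxy.
  - intros n.
    assert (E : sum_f_R0 dd n = sum_f_R0 (fun p => snd (nth p (Pre LS (S n)) dflt)) n).
    { apply sum_eq. intros p Hp. unfold dd.
      rewrite (nth_stable LS p (S p) (S n)); auto. pose proof (len_Pre LS (S p)). lia. lia. }
    rewrite E. eapply Rle_trans; [apply sum_nth_le|].
    { intros pc Hpc. destruct (Hok _ _ Hpc) as [[A _] _]. exact A. }
    rewrite sumd_Pre.
    assert (sum_f_R0 (fun i => sumd (LS i)) n <= sum_f_R0 (fun i => (b i - a i) + eps/2 * (/2)^(S i)) n).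
    { apply sum_Rle. intros i _. destruct (HLS i) as [_ [_ A]]. exact A. }
    rewrite sum_plus in H0. specialize (Hsum n). pose proof (pow_lt (/2) (S n) ltac:(lra)).
    assert (sum_f_R0 (fun i => eps / 2 * (/ 2) ^ S i) n = eps/2 * (1 - (/2)^(S n))).
    { rewrite <- geo_half. rewrite scal_sum. apply sum_eq. intros; ring. }
    nra.
Qed.

Lemma outer01 : leb_outer_le in01 1.
Proof.
  intros eps He. exists (fun _ => 0), (fun i => match i with O => 1 | _ => 0 end).
  split; [|split].
  - intros [|i]; lra.
  - intros x Hx. exists O. exact Hx.
  - intros n. induction n; simpl in *; lra.
Qed.

Theorem lemma2p2 (g : nat -> R) (m : nat -> nat)
  (g_pos : forall k, (1 <= k)%nat -> 0 < g k)
  (g_incr : forall k, (1 <= k)%nat -> g k < g (S k))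
  (g_inf : forall B : R, exists K, forall k, (K <= k)%nat -> B < g k)
  (m_pos : forall k, (1 <= k)%nat -> (1 <= m k)%nat)
  (m_incr : forall k, (2 <= k)%nat -> (m (pred k) < m k)%nat)
  (m_cond1 : forall k, (2 <= k)%nat ->
     1000 / 4 ^ m k <= acoef g k / 4 ^ m (pred k))
  (m_cond2 : forall k, (2 <= k)%nat ->
     1000 / 4 ^ m k <= acoef g (pred k) / 4 ^ m (pred k)) :
  (forall (S : R -> Prop), (forall x, S x -> in01 x) -> leb_measurable S ->
     forall M : R, leb_outer_le S M -> H1_le (graph_over g m S) M) /\
  H1_le (graph_over g m in01) 1 /\
  (forall (N : R -> Prop), (forall x, N x -> in01 x) -> leb_outer_le N 0 ->
     H1_le (graph_over g m N) 0).
Proof.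
  assert (H : Hyp g m) by (constructor; assumption).
  split; [|split].
  - intros SS _ _ M HM. apply (main_gen g m H); auto.
  - apply (main_gen g m H). apply outer01.
  - intros N _ HN. apply (main_gen g m H); auto.
Qed.
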